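(* Under the hypotheses of Lemma 2 (an RB function $H$ for $\mathcal X_r$, a constant $\eta\ge\max_{p\in\mathcal Q}H(\mathbf f[p])$, and a $1-\epsilon$ confidence region $\mathcal V$ with associated set $V$, for a given $n$-round device behavior $P_{A\mid X}$ and input distribution $\Pi$), there exists a conditional distribution $\tilde P(\cdot\mid\vec x)$ on $\mathcal A^n\cup\{\perp\}$ (with $\perp$ an additional ''abort'' symbol) such that, setting $\tilde P(\vec a,\vec x)=\tilde P(\vec a\mid\vec x)\Pi(\vec x)$ and $P(\perp\mid\vec x)=0$, $$\frac12\sum_{\vec a\in\mathcal A^n\cup\{\perp\},\vec x}\big|\tilde P(\vec a,\vec x)-P(\vec a,\vec x)\big|\le\epsilon,$$ and for every $\vec x\in\mathcal X^n$ and every $\vec a\in\mathcal A^n$ (i.e. $\vec a\neq\perp$), $$-\log_2\tilde P(\vec a\mid\vec x)\ge nH(\mathcal V(\vec a,\vec x,\epsilon))-\nu(\vec x)\eta$$ (with $-\log_20=+\infty$).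
   Context: Setting. A Bell device consists of $k$ boxes with finite input sets $\mathcal X_i$ and output sets $\mathcal A_i$; $\mathcal X=\prod_i\mathcal X_i$, $\mathcal A=\prod_i\mathcal A_i$. Single-round behaviors $p=(p(a\mid x))$; $\mathcal Q$ the set of quantum behaviors. Bell expressions $f$ with $f[p]=\sum_{a,x}f(a,x)p(a\mid x)$; $\mathbf f=(f_1,\dots,f_t)$, $\mathbf f[\mathcal Q]=\{\mathbf f[p]:p\in\mathcal Q\}$. $n$-round device behavior: $P(\vec a\mid\vec x)=\prod_{j=1}^np_{\vec a_{j-1},\vec x_{j-1}}(a_j\mid x_j)$ with each $p_{\vec a_{j-1},\vec x_{j-1}}\in\mathcal Q$ ($\vec a_j,\vec x_j$ the length-$j$ prefixes). Inputs drawn with $\Pi(\vec x)=\prod_j\pi(x_j)$; $P(\vec a,\vec x)=P(\vec a\mid\vec x)\Pi(\vec x)$. RB function for nonempty $\mathcal X_r\subseteq\mathcal X$: $H:\mathbf f[\mathcal Q]\to[0,\log_2|\mathcal A|]$ with (1) $\min_{a\in\mathcal A,x\in\mathcal X_r}(-\log_2p(a\mid x))\ge H(\mathbf f[p])$ for all $p\in\mathcal Q$, (2) $H$ convex along $\mathbf f[\mathcal Q]$: $H(q\mathbf f[p_1]+(1-q)\mathbf f[p_2])\le qH(\mathbf f[p_1])+(1-q)H(\mathbf f[p_2])$. For $\mathcal V\subseteq\mathbb R^t$, $H(\mathcal V)$ is a fixed number $\le\inf\{H(\mathbf y):\mathbf y\in\mathbf f[\mathcal Q]\cap\mathcal V\}$,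 equal to $0$ if the intersection is empty. $\nu(\vec x)=\#\{j:x_j\notin\mathcal X_r\}$. A $1-\epsilon$ confidence region is an assignment $(\vec a,\vec x)\mapsto\mathcal V(\vec a,\vec x,\epsilon)\subseteq\mathbb R^t$ with $\Pr_{P_{AX}}[\frac1n\sum_j\mathbf f[p_{\vec a_{j-1},\vec x_{j-1}}]\in\mathcal V(\vec a,\vec x,\epsilon)]\ge1-\epsilon$ for every $n$-round device behavior; $V$ is the set of $(\vec a,\vec x)$ for which this membership holds. *)

(* Defs.v *)
From Stdlib Require Import Reals ClassicalEpsilon.
From mathcomp Require Import all_boot.
Set Implicit Arguments. Unset Strict Implicit. Unset Printing Implicit Defensive.

Local Open Scope R_scope.

Definition rsum (T : finType) (F : T -> R) : R := \big[Rplus/0]_(i : T) F i.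
Definition rprod (n : nat) (F : 'I_n -> R) : R := \big[Rmult/1]_(j < n) F j.

(* logarithm to base 2 (only applied to positive arguments below) *)
Definition log2 (x : R) : R := ln x / ln 2.

Definition ind (P : Prop) : R :=
  if excluded_middle_informative P then 1 else 0.

Section Bell.
Variables (A X : finType) (t : nat).

Definition behavior := A -> X -> R.
Definition is_behavior (p : behavior) : Prop :=
  (forall a x, 0 <= p a x) /\ (forall x, rsum (fun a => p a x) = 1).

Definition bell_vec (f : 'I_t -> A -> X -> R) (p : behavior) : 'I_t -> R :=
  fun i => rsum (fun a => rsum (fun x => f i a x * p a x)).

(* RB function for X_r: H is defined on all of R^t but only its values on
   f[Q] matter. *)
Definition RB_function (Q : behavior -> Prop) (f : 'I_t -> A -> X -> R)
  (Xr : X -> bool) (H : ('I_t -> R) -> R) : Prop :=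
  (exists x, Xr x) /\
  (forall p, Q p -> 0 <= H (bell_vec f p) <= log2 (INR #|A|)) /\
  (* (1): min_{a, x in X_r} -log2 p(a|x) >= H(f[p]), with -log2 0 = +oo *)
  (forall p a x, Q p -> Xr x -> 0 < p a x -> H (bell_vec f p) <= - log2 (p a x)) /\
  (forall p1 p2 p3 q, Q p1 -> Q p2 -> Q p3 -> 0 <= q <= 1 ->
     bell_vec f p3 = (fun i => q * bell_vec f p1 i + (1 - q) * bell_vec f p2 i) ->
     H (bell_vec f p3) <= q * H (bell_vec f p1) + (1 - q) * H (bell_vec f p2)).

(* H(V): a number <= inf{H(y) : y in f[Q] /\ V}, equal to 0 if that set is empty *)
Definition RB_set_value (Q : behavior -> Prop) (f : 'I_t -> A -> X -> R)
  (H : ('I_t -> R) -> R) (HV : (('I_t -> R) -> Prop) -> R) : Prop :=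
  (forall S p, Q p -> S (bell_vec f p) -> HV S <= H (bell_vec f p)) /\
  (forall S, (forall p, Q p -> ~ S (bell_vec f p)) -> HV S = 0).

(* n-round device behavior, given by the history-dependent single-round
   behaviors p_{a_{j-1}, x_{j-1}} *)
Definition strategy := seq A -> seq X -> behavior.

Definition is_device (Q : behavior -> Prop) (s : strategy) : Prop :=
  forall ha hx, Q (s ha hx).

Definition devP (n : nat) (s : strategy) (a : n.-tuple A) (x : n.-tuple X) : R :=
  rprod (fun j : 'I_n => s (take j a) (take j x) (tnth a j) (tnth x j)).

Definition inPi (pi : X -> R) (n : nat) (x : n.-tuple X) : R :=
  rprod (fun j : 'I_n => pi (tnth x j)).

Definition avg_bell (f : 'I_t -> A -> X -> R) (n : nat) (s : strategy)
  (a : n.-tuple A) (x : n.-tuple X) : 'I_t -> R :=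
  fun i => / INR n * rsum (fun j : 'I_n => bell_vec f (s (take j a) (take j x)) i).

Definition conf_region (Q : behavior -> Prop) (f : 'I_t -> A -> X -> R)
  (pi : X -> R) (n : nat)
  (Vr : n.-tuple A -> n.-tuple X -> R -> (('I_t -> R) -> Prop)) (eps : R) : Prop :=
  forall s, is_device Q s ->
    rsum (fun a => rsum (fun x =>
      devP s a x * inPi pi x * ind (Vr a x eps (avg_bell f s a x)))) >= 1 - eps.

End Bell.

Definition nu (X : finType) (Xr : X -> bool) (n : nat) (x : n.-tuple X) : nat :=
  count (fun y => ~~ Xr y) x.

(* extension of P(.|x) to A^n + {bot} (None = bot), with P(bot|x) = 0 *)
Definition devP_ext (A X : finType) (n : nat) (s : strategy A X)
  (o : option (n.-tuple A)) (x : n.-tuple X) : R :=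
  match o with Some a => devP s a x | None => 0 end.

(* Main.v *)
From Pilot Require Import Defs.
From Stdlib Require Import Reals.
From mathcomp Require Import all_boot.
Local Open Scope R_scope.
From HB Require Import structures.
From Stdlib Require Import Lra ClassicalEpsilon.

Lemma RplusA : associative Rplus. Proof. by move=> *; rewrite Rplus_assoc. Qed.
Lemma RmultA : associative Rmult. Proof. by move=> *; rewrite Rmult_assoc. Qed.
HB.instance Definition _ := Monoid.isComLaw.Build R 0 Rplus RplusA Rplus_comm Rplus_0_l.
HB.instance Definition _ := Monoid.isComLaw.Build R 1 Rmult RmultA Rmult_comm Rmult_1_l.
HB.instance Definition _ := Monoid.isMulLaw.Build R 0 Rmult Rmult_0_l Rmult_0_r.
HB.instance Definition _ := Monoid.isAddLaw.Build R Rmult Rplus Rmult_plus_distr_r Rmult_plus_distr_l.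

Lemma rsum_option (T : finType) (F : option T -> R) :
  rsum F = F None + rsum (fun t => F (Some t)).
Proof.
rewrite /rsum.
have -> : \big[Rplus/0]_(o : option T) F o = \big[Rplus/0]_(o <- None :: map some (index_enum T)) F o.
  apply: perm_big; apply: uniq_perm.
  - exact: index_enum_uniq.
  - rewrite /= map_inj_uniq ?index_enum_uniq //; last by move=> ? ? [].
    by rewrite andbT; apply/mapP => -[].
  - move=> o; rewrite mem_index_enum in_cons; case: o => [t|] //=; by rewrite (mem_map (@Some_inj _)) mem_index_enum.
by rewrite big_cons big_map.
Qed.

Lemma rsum_tuple (T : finType) n (G : n.+1.-tuple T -> R) :
  rsum G = rsum (fun b => rsum (fun t : n.-tuple T => G [tuple of b :: t])).
Proof.
rewrite /rsum pair_big /=.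
rewrite (reindex (fun p : T * n.-tuple T => [tuple of p.1 :: p.2])) //.
exists (fun t : n.+1.-tuple T => (thead t, [tuple of behead t])).
  by move=> [b t] _ /=; congr pair; apply: val_inj.
by move=> t _; rewrite [RHS]tuple_eta.
Qed.

Lemma devP_cons (A X : finType) n (s : strategy A X) b (a : n.-tuple A) y (x : n.-tuple X) :
  devP s [tuple of b :: a] [tuple of y :: x] =
  s [::] [::] b y * devP (fun ha hx => s (b :: ha) (y :: hx)) a x.
Proof.
rewrite /devP /rprod big_ord_recl /=.
by rewrite !tnth0; congr Rmult; apply: eq_bigr => j _; rewrite !tnthS.
Qed.

Lemma devP_sum (A X : finType) n (s : strategy A X)
  (Hs : forall ha hx y, rsum (fun a => s ha hx a y) = 1) (x : n.-tuple X) :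
  rsum (fun a : n.-tuple A => devP s a x) = 1.
Proof.
elim: n s Hs x => [|n IH] s Hs x.
  rewrite /rsum (big_pred1 [tuple]) ?/devP ?/rprod ?big_ord0 //.
  by move=> t; apply/eqP; case: t => [[]].
rewrite rsum_tuple (tuple_eta x) /rsum.
under eq_bigr => b _.
  under eq_bigr => t _ do rewrite devP_cons.
  over.
rewrite -[RHS](Hs [::] [::] (thead x)) /rsum; apply: eq_bigr => b _ /=.
rewrite -big_distrr /= -[RHS]Rmult_1_r; congr Rmult.
by apply: (IH (fun ha hx => s (b :: ha) (thead x :: hx))) => ha hx y; apply: Hs.
Qed.

Lemma rsum_lin (T : finType) (c d : R) (F G : T -> R) :
  rsum (fun k => c * F k + d * G k) = c * rsum F + d * rsum G.
Proof. by rewrite /rsum big_split /= -!big_distrr. Qed.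

Lemma rsum_scale (T : finType) (c : R) (F : T -> R) :
  rsum (fun k => c * F k) = c * rsum F.
Proof. by rewrite /rsum -big_distrr. Qed.

Lemma rsum_le (T : finType) (F G : T -> R) :
  (forall k, F k <= G k) -> rsum F <= rsum G.
Proof.
move=> H; rewrite /rsum; apply: (big_ind2 Rle) => //; first lra.
by move=> *; apply: Rplus_le_compat.
Qed.

Lemma rsum_ge0 (T : finType) (F : T -> R) : (forall k, 0 <= F k) -> 0 <= rsum F.
Proof.
move=> H; rewrite /rsum; apply: (big_ind (Rle 0)) => //; first lra.
by move=> *; apply: Rplus_le_le_0_compat.
Qed.

Lemma rsum_sub (T : finType) (F G : T -> R) : rsum (fun k => F k - G k) = rsum F - rsum G.
Proof.
have -> : (fun k => F k - G k) = (fun k => 1 * F k + (-1) * G k).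
  by apply: FunctionalExtensionality.functional_extensionality => k; ring.
rewrite rsum_lin; ring.
Qed.

Lemma rsum_exchange (T U : finType) (F : T -> U -> R) :
  rsum (fun a => rsum (fun b => F a b)) = rsum (fun b => rsum (fun a => F a b)).
Proof. by rewrite /rsum exchange_big. Qed.

Lemma rsum_term_le (T : finType) (F : T -> R) t : (forall k, 0 <= F k) -> F t <= rsum F.
Proof.
move=> H; rewrite /rsum (bigD1 t) //=.
have : 0 <= \big[Rplus/0]_(i | i != t) F i.
  by apply: (big_ind (Rle 0)) => //; [lra | move=> *; apply: Rplus_le_le_0_compat].
lra.
Qed.

Lemma rprod_ge0 n (F : 'I_n -> R) : (forall j, 0 <= F j) -> 0 <= rprod F.
Proof.
move=> H; rewrite /rprod; apply: (big_ind (Rle 0)) => //; first lra.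
by move=> *; apply: Rmult_le_pos.
Qed.

Lemma rprod_pos_factor n (F : 'I_n -> R) : (forall j, 0 <= F j) -> 0 < rprod F ->
  forall j, 0 < F j.
Proof.
move=> H Hp j; case: (H j) => // E.
move: Hp; rewrite /rprod (bigD1 j) //= -E Rmult_0_l; lra.
Qed.

Lemma ln_rprod n (F : 'I_n -> R) : (forall j, 0 < F j) ->
  ln (rprod F) = rsum (fun j => ln (F j)).
Proof.
elim: n F => [|n IH] F H.
  by rewrite /rprod /rsum !big_ord0 ln_1.
rewrite /rprod /rsum !big_ord_recr /= ln_mult.
- by congr Rplus; apply: IH.
- apply: (big_ind (Rlt 0)) => //; first lra.
  by move=> *; apply: Rmult_lt_0_compat.
- by apply: H.
Qed.

Lemma nu_sum (X : finType) (Xr : X -> bool) n (x : n.-tuple X) (eta : R) :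
  INR (nu Xr x) * eta = rsum (fun j : 'I_n => if Xr (tnth x j) then 0 else eta).
Proof.
rewrite /nu -sumn_count.
have -> : sumn [seq (~~ Xr i : nat) | i <- x] = \sum_(i <- x) (~~ Xr i : nat).
  by rewrite sumnE big_map.
rewrite big_tuple.
rewrite (big_morph INR plus_INR (erefl (INR 0))) /rsum big_distrl /=.
by apply: eq_bigr => j _; case: (Xr (tnth x j)) => /=; ring.
Qed.

Lemma big_recrR n (F : 'I_n.+1 -> R) :
  \big[Rplus/0]_(i < n.+1) F i = \big[Rplus/0]_(i < n) F (widen_ord (leqnSn n) i) + F ord_max.
Proof. exact: big_ord_recr. Qed.

Lemma bell_lin (A X : finType) t (f : 'I_t -> A -> X -> R) (p1 p2 : behavior A X) q i :
  bell_vec f (fun a x => q * p1 a x + (1 - q) * p2 a x) i =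
  q * bell_vec f p1 i + (1 - q) * bell_vec f p2 i.
Proof.
rewrite /bell_vec -rsum_lin; apply: eq_bigr => a _.
rewrite -rsum_lin; apply: eq_bigr => x _; ring.
Qed.

Lemma jensen (A X : finType) t (Q : behavior A X -> Prop) (f : 'I_t -> A -> X -> R)
  (H : ('I_t -> R) -> R)
  (Q_conv : forall p1 p2 q, Q p1 -> Q p2 -> 0 <= q <= 1 ->
              Q (fun a x => q * p1 a x + (1 - q) * p2 a x))
  (Hconv : forall p1 p2 p3 q, Q p1 -> Q p2 -> Q p3 -> 0 <= q <= 1 ->
     bell_vec f p3 = (fun i => q * bell_vec f p1 i + (1 - q) * bell_vec f p2 i) ->
     H (bell_vec f p3) <= q * H (bell_vec f p1) + (1 - q) * H (bell_vec f p2))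
  n (p : 'I_n -> behavior A X) : (0 < n)%N -> (forall j, Q (p j)) ->
  exists pb, Q pb /\ (forall i, bell_vec f pb i = / INR n * rsum (fun j => bell_vec f (p j) i))
    /\ INR n * H (bell_vec f pb) <= rsum (fun j => H (bell_vec f (p j))).
Proof.
elim: n p => [|n IH] p // _ Hp.
case: n IH p Hp => [|n] IH p Hp.
  exists (p ord0); split => //; split.
    by move=> i; rewrite /rsum big_ord1 /=; field.
  by rewrite /rsum big_ord1 /=; lra.
have [pb [Qpb [Hb HH]]] := IH (fun j => p (widen_ord (leqnSn _) j)) isT (fun j => Hp _).
set q := INR n.+1 / INR n.+2.
have Hn : 0 < INR n.+1 by apply: lt_0_INR; apply/ltP.
have Hn2 : INR n.+2 = INR n.+1 + 1 by rewrite S_INR.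
have Hq : 0 <= q <= 1.
  rewrite /q; split; first by apply: Rle_mult_inv_pos; lra.
  apply: (Rmult_le_reg_l (INR n.+2)); first lra.
  replace (INR n.+2 * (INR n.+1 / INR n.+2)) with (INR n.+1) by (field; lra); lra.
exists (fun a x => q * pb a x + (1 - q) * p ord_max a x).
have Q3 : Q (fun a x => q * pb a x + (1 - q) * p ord_max a x) by apply: Q_conv.
split => //; split.
  move=> i; rewrite bell_lin Hb [in RHS]/rsum [in RHS]big_recrR -/(rsum _).
  rewrite /q Hn2; field; lra.
have := Hconv _ _ _ q Qpb (Hp ord_max) Q3 Hq.
have Hfun : bell_vec f (fun a x => q * pb a x + (1 - q) * p ord_max a x) =
   (fun i => q * bell_vec f pb i + (1 - q) * bell_vec f (p ord_max) i).
  by apply: FunctionalExtensionality.functional_extensionality => i; apply: bell_lin.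
move=> /(_ Hfun) Hc.
rewrite [in X in _ <= X]/rsum big_recrR -/(rsum _).
apply: Rle_trans (Rmult_le_compat_l _ _ _ (pos_INR _) Hc) _.
have -> : INR n.+2 * (q * H (bell_vec f pb) + (1 - q) * H (bell_vec f (p ord_max)))
  = INR n.+1 * H (bell_vec f pb) + H (bell_vec f (p ord_max)).
  rewrite /q Hn2; field; lra.
lra.
Qed.

Lemma rsum_ext (T : finType) (F G : T -> R) : (forall k, F k = G k) -> rsum F = rsum G.
Proof. by move=> E; rewrite /rsum; apply: eq_bigr => k _. Qed.

Lemma ind_cases (P : Prop) : (Pilot.Defs.ind P = 1 /\ P) \/ (Pilot.Defs.ind P = 0 /\ ~ P).
Proof. rewrite /Pilot.Defs.ind; case: excluded_middle_informative; tauto. Qed.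

Lemma inPi_sum (X : finType) (pi : X -> R) n : rsum pi = 1 ->
  rsum (fun x : n.-tuple X => inPi pi x) = 1.
Proof.
move=> Hpi.
exact: (@devP_sum X unit n (fun _ _ b _ => pi b) (fun _ _ _ => Hpi) [tuple of nseq n tt]).
Qed.

Theorem lemma3 (A X : finType) (t n : nat) (Q : behavior A X -> Prop)
  (f : 'I_t -> A -> X -> R) (Xr : X -> bool)
  (H : ('I_t -> R) -> R) (HV : (('I_t -> R) -> Prop) -> R) (eta : R)
  (pi : X -> R) (s : strategy A X)
  (Vr : n.-tuple A -> n.-tuple X -> R -> (('I_t -> R) -> Prop)) (eps : R)
  (* standing facts about the quantum set Q: behaviors, convex *)
  (Q_beh : forall p, Q p -> is_behavior p)
  (Q_conv : forall p1 p2 q, Q p1 -> Q p2 -> 0 <= q <= 1 ->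
              Q (fun a x => q * p1 a x + (1 - q) * p2 a x))
  (* hypotheses of Lemma 2 *)
  (HRB : RB_function Q f Xr H)
  (HHV : RB_set_value Q f H HV)
  (Heta : forall p, Q p -> H (bell_vec f p) <= eta)
  (Hpi : (forall x, 0 <= pi x) /\ rsum pi = 1)
  (Hs : is_device Q s)
  (HV_conf : conf_region Q f pi Vr eps) :
  exists Pt : option (n.-tuple A) -> n.-tuple X -> R,
    (forall x, (forall o, 0 <= Pt o x) /\ rsum (fun o => Pt o x) = 1) /\
    / 2 * rsum (fun o => rsum (fun x =>
        Rabs (Pt o x * inPi pi x - devP_ext s o x * inPi pi x))) <= eps /\
    (forall (x : n.-tuple X) (a : n.-tuple A), 0 < Pt (Some a) x ->
        INR n * HV (Vr a x eps) - INR (nu Xr x) * eta <= - log2 (Pt (Some a) x)).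
Proof.
set I := fun (a : n.-tuple A) (x : n.-tuple X) => Pilot.Defs.ind (Vr a x eps (avg_bell f s a x)).
set D := fun (a : n.-tuple A) (x : n.-tuple X) => devP s a x.
have Hbeh : forall ha hx, is_behavior (s ha hx) by move=> ha hx; apply: Q_beh.
have Hnorm : forall ha hx y, rsum (fun a => s ha hx a y) = 1.
  by move=> ha hx y; case: (Hbeh ha hx) => _ ->.
have Hs0 : forall ha hx a y, 0 <= s ha hx a y by move=> ha hx a y; case: (Hbeh ha hx) => H0 _; apply: H0.
have Hdev1 : forall x, rsum (fun a => D a x) = 1 by move=> x; apply: devP_sum.
have D0 : forall a x, 0 <= D a x by move=> a x; apply: rprod_ge0 => j; apply: Hs0.
have I01 : forall a x, (I a x = 1) \/ (I a x = 0).
  by move=> a x; case: (ind_cases (Vr a x eps (avg_bell f s a x))) => -[]; rewrite /I => ->; tauto.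
have I0 : forall a x, 0 <= I a x <= 1 by move=> a x; case: (I01 a x) => ->; lra.
have Hpin : rsum (fun x : n.-tuple X => inPi pi x) = 1 by apply: inPi_sum; case: Hpi.
have pin0 : forall x : n.-tuple X, 0 <= inPi pi x.
  by move=> x; apply: rprod_ge0 => j; case: Hpi => H0 _; apply: H0.
have DIle : forall x, rsum (fun a => D a x * I a x) <= 1.
  move=> x; rewrite -(Hdev1 x); apply: rsum_le => a.
  have := D0 a x; have := I0 a x; nra.
exists (fun o x => match o with
  | Some a => D a x * I a x
  | None => 1 - rsum (fun a => D a x * I a x) end).
split.
  move=> x; split.
    case=> [a|]; last by have := DIle x; lra.
    by have := D0 a x; have := I0 a x; nra.
  by rewrite rsum_option; ring.
have Hc := HV_conf s Hs.
set C := rsum (fun a => rsum (fun x => devP s a x * inPi pi x * I a x)) in Hc.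
split.
  rewrite rsum_option.
  have E1 : rsum (fun x => Rabs ((1 - rsum (fun a => D a x * I a x)) * inPi pi x
                 - devP_ext s None x * inPi pi x)) = 1 - C.
    transitivity (rsum (fun x : n.-tuple X => inPi pi x) - C); last by rewrite Hpin.
    rewrite /= /C rsum_exchange -rsum_sub; apply: rsum_ext => x.
    rewrite Rmult_0_l Rminus_0_r Rabs_pos_eq; last first.
      apply: Rmult_le_pos; last apply: pin0. by apply: Rge_le; apply: Rge_minus; apply: Rle_ge; apply: DIle.
    rewrite Rmult_minus_distr_r Rmult_1_l; congr Rminus.
    rewrite Rmult_comm -rsum_scale; apply: rsum_ext => a; rewrite /D; ring.
  have E2 : rsum (fun a => rsum (fun x => Rabs (D a x * I a x * inPi pi x
                 - devP_ext s (Some a) x * inPi pi x))) = 1 - C.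
    have -> : 1 = rsum (fun a => rsum (fun x => D a x * inPi pi x)).
      rewrite rsum_exchange -Hpin; apply: rsum_ext => x.
      rewrite -[LHS]Rmult_1_r -[X in _ * X](Hdev1 x) -rsum_scale.
      by apply: rsum_ext => a; ring.
    rewrite /C -rsum_sub; apply: rsum_ext => a; rewrite -rsum_sub; apply: rsum_ext => x.
    rewrite /= -/(D a x); have := D0 a x; have := pin0 x.
    case: (I01 a x) => ->; move=> *.
      by rewrite Rmult_1_r Rminus_diag Rabs_R0; ring.
    rewrite Rmult_0_r Rmult_0_l Rminus_0_l Rabs_Ropp Rabs_pos_eq; first ring.
    by apply: Rmult_le_pos.
  rewrite E1 E2; lra.
move=> x a Hpos.
have [HI HV1] : I a x = 1 /\ Vr a x eps (avg_bell f s a x).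
  case: (ind_cases (Vr a x eps (avg_bell f s a x))) => -[] E HVr; first by [].
  by move: Hpos; rewrite /I E Rmult_0_r; lra.
rewrite HI Rmult_1_r in Hpos *.
set p := fun j : 'I_n => s (take j a) (take j x).
set F := fun j : 'I_n => p j (tnth a j) (tnth x j).
have DF : D a x = rprod F by [].
have F0 : forall j, 0 <= F j by move=> j; apply: Hs0.
have Fpos : forall j, 0 < F j by apply: rprod_pos_factor => //; rewrite -DF.
have Fle1 : forall j, F j <= 1.
  move=> j; rewrite -(Hnorm (take j a) (take j x) (tnth x j)).
  by rewrite /F /p; apply: (@rsum_term_le _ (fun b => s (take j a) (take j x) b (tnth x j)) (tnth a j)) => b; apply: Hs0.
have ln2 : 0 < ln 2 by have := ln_lt_2; lra.
have Hlog : - log2 (D a x) = rsum (fun j => - (ln (F j) / ln 2)).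
  rewrite DF /log2 ln_rprod //.
  rewrite (@rsum_ext _ (fun j => - (ln (F j) / ln 2)) (fun j => (- / ln 2) * ln (F j))); last first.
    by move=> j; field; lra.
  rewrite rsum_scale; field; lra.
rewrite Hlog.
have Hj : forall j, H (bell_vec f (p j)) - (if Xr (tnth x j) then 0 else eta) <= - (ln (F j) / ln 2).
  move=> j; case E: (Xr (tnth x j)).
    rewrite Rminus_0_r.
    case: HRB => _ [_ [H1 _]].
    by have := H1 (p j) (tnth a j) (tnth x j) (Hs _ _) E (Fpos j); rewrite /log2.
  have := Heta (p j) (Hs _ _).
  have : ln (F j) <= 0.
    case: (Fle1 j) => h; last by rewrite h ln_1; lra.
    by rewrite -ln_1; apply: Rlt_le; apply: ln_increasing.
  move=> h1 h2.
  have : 0 <= - (ln (F j) / ln 2).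
    replace (-(ln (F j)/ln 2)) with ((- ln (F j)) * / ln 2) by (rewrite /Rdiv; ring).
    by apply: Rmult_le_pos; [lra | apply: Rlt_le; apply: Rinv_0_lt_compat].
  lra.
have HJ : INR n * HV (Vr a x eps) <= rsum (fun j => H (bell_vec f (p j))).
  have [n0|npos] := posnP n.
    have -> : INR n = 0 by rewrite n0.
    rewrite Rmult_0_l /rsum big1; first lra.
    by move=> j _; have := ltn_ord j; rewrite {2}n0.
  case: HRB => _ [_ [_ Hconv]].
  have [pb [Qpb [Hb HH]]] := @jensen A X t Q f H Q_conv Hconv n p npos (fun j => Hs _ _ : Q (p j)).
  have Heq : bell_vec f pb = avg_bell f s a x.
    by apply: FunctionalExtensionality.functional_extensionality => i; rewrite Hb.
  have := proj1 HHV (Vr a x eps) pb Qpb (ltac:(by rewrite Heq)).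
  move=> h; apply: Rle_trans HH.
  by apply: Rmult_le_compat_l => //; apply: pos_INR.
have := @rsum_le _ _ _ Hj; rewrite rsum_sub -nu_sum => h.
apply: Rle_trans _ h; lra.
Qed.
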